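(* For $n\ge3$, the eigenvalues of $H(N_n)$ are $0$, $2$ and $-2$, each with multiplicity $n$.
   Context: For a digraph $X$ (finite vertex set, arcs are ordered pairs of distinct vertices), $H(X)$ has $(u,v)$-entry $1$ if $uv$ and $vu$ are arcs, $i$ if only $uv$ is an arc, $-i$ if only $vu$ is an arc, and $0$ otherwise. For $n\ge3$, the necklace digraph $N_n$ is the oriented graph with vertex set $\{v_j: j\in\mathbb{Z}_{2n}\}\cup\{w_k: k\in\mathbb{Z}_n\}$ (so $3n$ vertices) and arc set $\{v_jv_{j+1}: j\in\mathbb{Z}_{2n}\}\cup\{v_{2k}w_k,\ v_{2k+2}w_k: k\in\mathbb{Z}_n\}$, indices of $v$ taken modulo $2n$. *)

(* Defs.v *)
From HB Require Import structures.
From mathcomp Require Import all_boot all_order all_algebra all_field.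
Set Implicit Arguments. Unset Strict Implicit. Unset Printing Implicit Defensive.
Import Order.TTheory GRing.Theory Num.Theory.
Local Open Scope ring_scope.

Definition herm_entry (V : finType) (arc : rel V) (u v : V) : algC :=
  if arc u v && arc v u then 1
  else if arc u v then 'i
  else if arc v u then - 'i
  else 0.

Definition herm_adj (V : finType) (arc : rel V) : 'M[algC]_#|V| :=
  \matrix_(i, j) herm_entry arc (enum_val i) (enum_val j).

(* Necklace digraph N_n: vertices v_j (j in Z_{2n}) as inl j,
   w_k (k in Z_n) as inr k. Arcs v_j v_{j+1}, v_{2k} w_k, v_{2k+2} w_k. *)
Definition necklace_vertex (n : nat) : finType := ('I_(2 * n) + 'I_n)%type.

Definition necklace_arc (n : nat) : rel (necklace_vertex n) :=
  fun x y =>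
    match x, y with
    | inl j, inl j' => (nat_of_ord j' == (j.+1 %% (2 * n))%N)
    | inl j, inr k => (nat_of_ord j == ((2 * k) %% (2 * n))%N)
                      || (nat_of_ord j == ((2 * k + 2) %% (2 * n))%N)
    | _, _ => false
    end.

(* Main.v *)
Require Import Defs.
From HB Require Import structures.
From mathcomp Require Import all_boot all_order all_algebra all_field.
From mathcomp Require Import ring zify.
Set Implicit Arguments. Unset Strict Implicit. Unset Printing Implicit Defensive.
Import GRing.Theory Num.Theory.
Local Open Scope ring_scope.

Lemma count_lemma (m k : nat) (d : 'I_m -> algC) :
  (forall i, d i ^+ 3 = 4 * d i) ->
  \sum_i d i = 0 -> \sum_i d i ^+ 2 = (8 * k)%:R -> m = (3 * k)%N ->
  \prod_i ('X - (d i)%:P) = 'X ^+ k * ('X - 2%:P) ^+ k * ('X + 2%:P) ^+ k :> {poly algC}.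
Proof.
move=> d3 s1 s2 hm.
have dv i : [|| d i == 0, d i == 2 | d i == -2].
  have : d i * (d i - 2) * (d i + 2) = 0.
    have -> : d i * (d i - 2) * (d i + 2) = d i ^+ 3 - 4 * d i by ring.
  by rewrite d3 subrr.
  by move/eqP; rewrite !mulf_eq0 subr_eq0 addr_eq0 => /orP[/orP[]|] ->; rewrite ?orbT.
pose a := #|[pred i | d i == 0]|.
pose b := #|[pred i | d i == 2]|.
pose c := #|[pred i | d i == -2]|.
have n20 : (2 == 0 :> algC) = false by rewrite pnatr_eq0.
have nm20 : (-2 == 0 :> algC) = false by rewrite oppr_eq0 pnatr_eq0.
have n0m2 : (0 == -2 :> algC) = false by rewrite eq_sym nm20.
have n2m2 : (2 == -2 :> algC) = false.
  by rewrite -subr_eq0 opprK -natrD pnatr_eq0.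
have nm22 : (-2 == 2 :> algC) = false by rewrite eq_sym n2m2.
have e1 : [pred i | (d i != 0) && (d i == 2)] =1 [pred i | d i == 2].
  by move=> i /=; case: (d i =P 2) => [->|]; rewrite ?n20 ?andbF.
have e2 : [pred i | (d i != 0) && (d i != 2)] =1 [pred i | d i == -2].
  move=> i /=; have := dv i.
  by case/or3P => /eqP ->; rewrite ?eqxx ?n20 ?nm20 ?n0m2 ?n2m2 ?nm22.
have part (R : Type) (idx : R) (op : Monoid.com_law idx) (F : 'I_m -> R) :
   \big[op/idx]_i F i = op (\big[op/idx]_(i | d i == 0) F i)
      (op (\big[op/idx]_(i | d i == 2) F i) (\big[op/idx]_(i | d i == -2) F i)).
  rewrite (bigID (fun i => d i == 0)) /= (bigID (fun i => d i == 2) (fun i => d i != 0)) /=.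
  by rewrite (eq_bigl _ _ e1) (eq_bigl _ _ e2).
have hcard : (a + (b + c) = m)%N.
  rewrite -[m]card_ord -sum1_card (part _ _ addn (fun _ => 1%N)).
  by rewrite !sum1_card.
have hs1 := s1; rewrite (part _ _ +%R) in hs1.
have E0 : \sum_(i | d i == 0) d i = 0 by rewrite big1 // => i /eqP.
have E2 : \sum_(i | d i == 2) d i = 2 *+ b.
  by rewrite (eq_bigr (fun=> 2)) ?sumr_const // => i /eqP.
have E3 : \sum_(i | d i == -2) d i = -2 *+ c.
  by rewrite (eq_bigr (fun=> -2)) ?sumr_const // => i /eqP.
rewrite E0 E2 E3 in hs1.
have hs2 := s2; rewrite (part _ _ +%R) in hs2.
have F0 : \sum_(i | d i == 0) d i ^+ 2 = 0 by rewrite big1 // => i /eqP ->; rewrite expr0n.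
have F2 : \sum_(i | d i == 2) d i ^+ 2 = 4 *+ b.
  by rewrite (eq_bigr (fun=> 4)) ?sumr_const // => i /eqP ->; rewrite -natrX.
have F3 : \sum_(i | d i == -2) d i ^+ 2 = 4 *+ c.
  by rewrite (eq_bigr (fun=> 4)) ?sumr_const // => i /eqP ->; rewrite sqrrN -natrX.
rewrite F0 F2 F3 in hs2.
have n4 : (4 : algC) != 0 by rewrite pnatr_eq0.
have n2 : (2 : algC) != 0 by rewrite pnatr_eq0.
have ea : a = #|[pred i | d i == 0]| by [].
have eb : b = #|[pred i | d i == 2]| by [].
have ec : c = #|[pred i | d i == -2]| by [].
clearbody a b c.
have hbc : b = c.
  have h : (2:algC) * (b%:R - c%:R) = 0 + (2 *+ b + -2 *+ c) by ring.
  rewrite hs1 in h.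
  by move/eqP: h; rewrite mulf_eq0 (negbTE n2) subr_eq0 eqr_nat => /eqP.
have hbc2 : (b + c = 2 * k)%N.
  have h : (4:algC) * ((b + c)%:R - (2 * k)%:R) = 0.
    have -> : (4:algC) * ((b + c)%:R - (2 * k)%:R) = (0 + (4 *+ b + 4 *+ c)) - (8 * k)%:R.
      by ring.
    by rewrite hs2 subrr.
  by move/eqP: h; rewrite mulf_eq0 (negbTE n4) subr_eq0 eqr_nat => /eqP.
have ha : a = k by lia.
have hb : b = k by lia.
have hc : c = k by lia.
rewrite (part _ _ *%R) /=.
have P0 : \prod_(i | d i == 0) ('X - (d i)%:P) = 'X ^+ a.
  rewrite ea.
  by rewrite (eq_bigr (fun=> 'X)) ?prodr_const // => i /eqP ->; rewrite subr0.
have P2 : \prod_(i | d i == 2) ('X - (d i)%:P) = ('X - 2%:P) ^+ b.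
  rewrite eb.
  by rewrite (eq_bigr (fun=> 'X - 2%:P)) ?prodr_const // => i /eqP ->.
have P3 : \prod_(i | d i == -2) ('X - (d i)%:P) = ('X + 2%:P) ^+ c.
  rewrite ec.
  by rewrite (eq_bigr (fun=> 'X + 2%:P)) ?prodr_const // => i /eqP ->; rewrite polyCN opprK.
by rewrite P0 P2 P3 ha hb hc mulrA.
Qed.

Lemma charpoly_conj (m : nat) (P D : 'M[algC]_m) : P \in unitmx ->
  char_poly (invmx P *m D *m P) = char_poly D.
Proof.
move=> Pu; rewrite /char_poly /char_poly_mx.
set Q := map_mx polyC P; set Qi := map_mx polyC (invmx P).
have QQ : Qi *m Q = 1%:M by rewrite -map_mxM mulVmx // map_mx1.
have -> : 'X%:M - map_mx polyC (invmx P *m D *m P)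
   = Qi *m ('X%:M - map_mx polyC D) *m Q.
  rewrite !map_mxM mulmxBr mulmxBl -/Q -/Qi; congr (_ - _).
  by rewrite scalar_mxC -mulmxA QQ mulmx1.
by rewrite !det_mulmx mulrAC -det_mulmx QQ det1 mul1r.
Qed.

Lemma charpoly_gen (m k : nat) (A : 'M[algC]_m) :
  A *m A *m A = 4 *: A -> \tr A = 0 -> \tr (A *m A) = (8 * k)%:R ->
  m = (3 * k)%N ->
  char_poly A = 'X ^+ k * ('X - 2%:P) ^+ k * ('X + 2%:P) ^+ k :> {poly algC}.
Proof.
case: m A => [|m'] A h3 h1 h2 hm.
  have -> : k = 0%N by lia.
  by rewrite /char_poly det_mx00 !expr0 !mul1r.
have n20 : (2 == 0 :> algC) = false by rewrite pnatr_eq0.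
have nm20 : (-2 == 0 :> algC) = false by rewrite oppr_eq0 pnatr_eq0.
have n2m2 : (2 == -2 :> algC) = false.
  by rewrite -subr_eq0 opprK -natrD pnatr_eq0.
have [P Pu] : exists2 P : 'M_m'.+1, P \in unitmx & similar_diag P A.
  apply/diagonalizableP; exists [:: 0; 2; -2].
    by rewrite /= !inE eq_sym n20 eq_sym nm20 n2m2.
  apply: mxminpoly_min.
  have -> : \prod_(x <- [:: 0; 2; -2]) ('X - x%:P) = 'X ^+ 3 - 4%:P * 'X :> {poly algC}.
    rewrite !big_cons big_nil polyCN !polyC_natr polyC0; ring.
  rewrite rmorphB rmorphXn rmorphM /= horner_mx_X horner_mx_C.
  by rewrite !exprS expr0 mulr1 !mulrA -!mulmxE mul_scalar_mx h3 subrr.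
move=> /(similar_diagLR Pu) [d]; rewrite conjVmx // => hA.
set D := diag_mx d.
have hAA : A *m A = invmx P *m (D *m D) *m P.
  by rewrite hA !mulmxA mulmxK.
have e X : X = P *m (invmx P *m X *m P) *m invmx P.
  by rewrite !mulmxA mulmxV // mul1mx mulmxK.
have h3d : D *m D *m D = 4 *: D.
  have e3 : invmx P *m (D *m D *m D) *m P = A *m A *m A.
    by rewrite hA !mulmxA !mulmxK.
  by rewrite (e (D *m D *m D)) e3 h3 hA -scalemxAr -scalemxAl -e.
have tr_conj X : \tr (invmx P *m X *m P) = \tr X.
  by rewrite mxtrace_mulC mulmxA mulmxV // mul1mx.
rewrite hA charpoly_conj // char_poly_trig ?diag_mx_is_trig //.
under eq_bigr do rewrite mxE eqxx mulr1n.
apply: (@count_lemma _ k (fun i => d 0 i) _ _ _ hm).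
- move=> i; move/matrixP: h3d => /(_ i i).
  rewrite /D !mulmx_diag !mxE eqxx !mulr1n => <-; ring.
- by rewrite -mxtrace_diag -tr_conj -hA.
- rewrite -h2 hAA tr_conj /D mulmx_diag mxtrace_diag.
  by apply: eq_bigr => i _; rewrite mxE expr2.
Qed.

Lemma valS n (t : 'I_n) : nat_of_ord (ordS t) = if t.+1 == n then 0%N else t.+1.
Proof.
rewrite /=; case: eqP => [->|h]; first by rewrite modnn.
rewrite modn_small //; have := ltn_ord t; lia.
Qed.

Lemma valP n (t : 'I_n) : nat_of_ord (ord_pred t) = if t == 0%N :> nat then n.-1 else t.-1.
Proof.
have := ltn_ord t; rewrite /=; case: eqP => [->|h] lt.
  by rewrite add0n modn_small //; lia.
have -> : (t + n).-1 = t.-1 + n by lia.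
by rewrite modnDr modn_small //; lia.
Qed.

Fact Ev_subproof n (k : 'I_n) : (2 * k < 2 * n)%N.
Proof. have := ltn_ord k; lia. Qed.
Definition Ev n (k : 'I_n) : 'I_(2 * n) := Ordinal (@Ev_subproof n k).

Lemma Ev_inj n : injective (@Ev n).
Proof. move=> a b /(congr1 val) /= h; apply: val_inj => /=; lia. Qed.

Lemma modS x m : (x < m)%N -> (x.+1 %% m = if x.+1 == m then 0 else x.+1)%N.
Proof. move=> h; case: eqP => [->|e]; first by rewrite modnn. rewrite modn_small //; lia. Qed.

Lemma SSE n (k : 'I_n) : ordS (ordS (Ev k)) = Ev (ordS k).
Proof.
apply: val_inj => /=; have := ltn_ord k => lk.
rewrite (@modS (2 * k)); last by lia.
have -> : ((2 * k).+1 == 2 * n)%N = false by apply/eqP; lia.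
rewrite (@modS (2 * k).+1); last by lia.
rewrite (@modS k) //.
by case: eqP => h1; case: eqP => h2 //; lia.
Qed.

Lemma ordS_neq_pred n (t : 'I_n) : (2 < n)%N -> ordS t != ord_pred t.
Proof.
move=> hn; apply/eqP => /(congr1 (@nat_of_ord n)); rewrite valS valP.
have := ltn_ord t; case: eqP => h1; case: eqP => h2; lia.
Qed.

Lemma ordS_neq n (t : 'I_n) : (1 < n)%N -> ordS t != t.
Proof.
move=> hn; apply/eqP => /(congr1 (@nat_of_ord n)); rewrite valS.
have := ltn_ord t; case: eqP => h1; lia.
Qed.

Lemma eq_ordS n (a b : 'I_n) : (a == ordS b) = (b == ord_pred a).
Proof. by apply/eqP/eqP => ->; rewrite ?ordSK ?ord_predK. Qed.

Lemma arcLL n (a b : 'I_(2 * n)) : necklace_arc (inl a) (inl b) = (b == ordS a).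
Proof. by []. Qed.

Lemma arcLR n (a : 'I_(2 * n)) (k : 'I_n) :
  necklace_arc (inl a) (inr k) = (a == Ev k) || (a == Ev (ordS k)).
Proof.
rewrite -SSE /necklace_arc /=; have := ltn_ord k => lk.
rewrite (modn_small (_ : 2 * k < 2 * n)%N); last by lia.
congr (_ || _); congr (_ == _); rewrite [RHS]/=.
rewrite (@modS (2 * k)); last by lia.
have -> : ((2 * k).+1 == 2 * n)%N = false by apply/eqP; lia.
rewrite (@modS (2 * k).+1); last by lia.
case: eqP => h; last by rewrite modn_small; lia.
by rewrite addn2 h modnn.
Qed.

Lemma arcEv n (t k : 'I_n) :
  necklace_arc (inl (Ev t)) (inr k) = (k == t) || (k == ord_pred t).
Proof.
by rewrite arcLR (inj_eq (@Ev_inj n)) (inj_eq (@Ev_inj n)) eq_ordS eq_sym.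
Qed.

Definition hh n := herm_entry (@necklace_arc n).

Lemma hLL n (a b : 'I_(2 * n)) : (2 < n)%N ->
  hh (inl a) (inl b) = 'i * (b == ordS a)%:R - 'i * (b == ord_pred a)%:R.
Proof.
move=> hn; rewrite /hh /herm_entry !arcLL (eq_ordS a b).
have hne : ordS a != ord_pred a by apply: ordS_neq_pred; lia.
case: (b =P ordS a) => [->|h1]; first by rewrite (negbTE hne) /= mulr0 subr0 mulr1.
case: (b =P ord_pred a) => [_|_] /=; first by rewrite mulr0 sub0r mulr1.
by rewrite !mulr0 subr0.
Qed.

Lemma hLR n (a : 'I_(2 * n)) (k : 'I_n) :
  hh (inl a) (inr k) = 'i * (necklace_arc (inl a) (inr k))%:R.
Proof.
rewrite /hh /herm_entry (_ : necklace_arc (inr k) (inl a) = false) // andbF.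
by case: (necklace_arc (inl a) (inr k)); rewrite ?mulr1 ?mulr0.
Qed.

Lemma hRL n (a : 'I_(2 * n)) (k : 'I_n) :
  hh (inr k) (inl a) = - 'i * (necklace_arc (inl a) (inr k))%:R.
Proof.
rewrite /hh /herm_entry (_ : necklace_arc (inr k) (inl a) = false) // andFb.
by case: (necklace_arc (inl a) (inr k)); rewrite ?mulr1 ?mulr0.
Qed.

Lemma hRR n (k k' : 'I_n) : hh (inr k) (inr k') = 0.
Proof. by []. Qed.

Lemma sum_delta m (s : 'I_m) (F : 'I_m -> algC) :
  \sum_b (b == s)%:R * F b = F s.
Proof.
rewrite (bigD1 s) //= eqxx mul1r big1 ?addr0 // => b /negbTE ->; by rewrite mul0r.
Qed.

Lemma sum_delta2 m (x y : 'I_m) :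
  \sum_b (b == x)%:R * (b == y)%:R = (x == y)%:R :> algC.
Proof. exact: sum_delta. Qed.

Lemma eq_ord_pred n (a b : 'I_n) : (a == ord_pred b) = (b == ordS a).
Proof. by apply/eqP/eqP => ->; rewrite ?ordSK ?ord_predK. Qed.

Lemma orb_natr (a b : bool) : ~~ (a && b) -> (a || b)%:R = a%:R + b%:R :> algC.
Proof. by case: a; case: b => //= _; rewrite ?addr0 ?add0r. Qed.

Lemma iiE (x1 x2 y1 y2 : algC) :
  ('i * x1 - 'i * x2) * ('i * y1 - 'i * y2) = - ((x1 - x2) * (y1 - y2)).
Proof.
have ii : 'i * 'i = -1 :> algC by rewrite -expr2 sqrCi.
transitivity ('i * 'i * ((x1 - x2) * (y1 - y2))); first by ring.
by rewrite ii mulN1r.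
Qed.

Lemma KE n (t t' : 'I_n) : (2 < n)%N ->
  \sum_(x : necklace_vertex n) hh (inl (Ev t)) x * hh x (inl (Ev t'))
  = 4 * (t' == t)%:R.
Proof.
move=> hn; rewrite /necklace_vertex big_sumType /=.
set e := Ev t; set e' := Ev t'.
have E1 : \sum_(b < 2 * n) hh (inl e) (inl b) * hh (inl b) (inl e')
  = - ((ordS e == ord_pred e')%:R - (ordS e == ordS e')%:R
       - (ord_pred e == ord_pred e')%:R + (ord_pred e == ordS e')%:R).
  rewrite -!sum_delta2 -sumrB -sumrB -big_split -sumrN; apply: eq_bigr => b _ /=.
  rewrite !hLL // (eq_ordS e' b) (eq_ord_pred e' b) iiE; ring.
have tP : t != ord_pred t.
  rewrite eq_ord_pred eq_sym ordS_neq //; lia.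
have tP' : t' != ord_pred t'.
  rewrite eq_ord_pred eq_sym ordS_neq //; lia.
have E2 : \sum_(k < n) hh (inl e) (inr k) * hh (inr k) (inl e')
  = (t == t')%:R + (t == ord_pred t')%:R + (ord_pred t == t')%:R
    + (ord_pred t == ord_pred t')%:R.
  rewrite -!sum_delta2 -!big_split; apply: eq_bigr => k _ /=.
  rewrite hLR hRL !arcEv !orb_natr; first last.
  - by apply/negP => /andP[/eqP ->]; rewrite (negbTE tP).
  - by apply/negP => /andP[/eqP ->]; rewrite (negbTE tP').
  have ii : 'i * - 'i = 1 :> algC by rewrite mulrN -expr2 sqrCi opprK.
  transitivity ('i * - 'i * (((k == t)%:R + (k == ord_pred t)%:R) *
     ((k == t')%:R + (k == ord_pred t')%:R)) : algC); first by ring.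
  by rewrite ii; ring.
rewrite E1 E2.
rewrite (eq_ord_pred (ordS e) e') /e /e' SSE (inj_eq (@Ev_inj n)).
rewrite (inj_eq (@ordS_inj _)) (inj_eq (@ord_pred_inj _)) (inj_eq (@Ev_inj n)).
rewrite (eq_sym (ord_pred (Ev t))) (eq_ord_pred (ordS (Ev t'))) SSE (inj_eq (@Ev_inj n)).
rewrite (eq_ord_pred t t') (eq_sym (ord_pred t)) (eq_ord_pred t' t) (inj_eq (@ord_pred_inj _)).
rewrite (eq_sym t' t); ring.
Qed.

Definition evn n (x : necklace_vertex n) : bool :=
  if x is inl a then ~~ odd a else false.

Lemma oddS n (a : 'I_(2 * n)) : odd (ordS a) = ~~ odd a.
Proof.
rewrite valS; case: eqP => h /=; last by [].
by have := congr1 odd h; rewrite /= oddM andFb => ->.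
Qed.

Lemma oddP n (a : 'I_(2 * n)) : odd (ord_pred a) = ~~ odd a.
Proof. by rewrite -{2}(ord_predK a) oddS negbK. Qed.

Lemma Ev_even n (t : 'I_n) : odd (Ev t) = false.
Proof. by rewrite /= oddM andFb. Qed.

Lemma evnE n (a : 'I_(2 * n)) : ~~ odd a -> exists t : 'I_n, a = Ev t.
Proof.
move=> ha; have := odd_double_half a; rewrite (negbTE ha) add0n -mul2n => e.
have lt : (a./2 < n)%N by have := ltn_ord a; lia.
by exists (Ordinal lt); apply: val_inj => /=.
Qed.

Lemma bip n (x y : necklace_vertex n) : (2 < n)%N -> evn x = evn y -> hh x y = 0.
Proof.
move=> hn; case: x => [a|k]; case: y => [b|k'] //= e.
- rewrite hLL //.
  have -> : (b == ordS a) = false.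
    by apply/negbTE/eqP => h; move: e; rewrite h oddS; case: (odd a).
  have -> : (b == ord_pred a) = false.
    by apply/negbTE/eqP => h; move: e; rewrite h oddP; case: (odd a).
  by rewrite !mulr0 subrr.
- rewrite hLR arcLR.
  have /negbTE -> : ~~ (a == Ev k').
    by apply/eqP => h; move: e; rewrite h Ev_even.
  have /negbTE -> : ~~ (a == Ev (ordS k')).
    by apply/eqP => h; move: e; rewrite h Ev_even.
  by rewrite mulr0.
- rewrite hRL arcLR.
  have /negbTE -> : ~~ (b == Ev k).
    by apply/eqP => h; move: e; rewrite h Ev_even.
  have /negbTE -> : ~~ (b == Ev (ordS k)).
    by apply/eqP => h; move: e; rewrite h Ev_even.
  by rewrite mulr0.
Qed.

Lemma hh_anti n (x y : necklace_vertex n) : (2 < n)%N -> hh y x = - hh x y.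
Proof.
move=> hn; case: x => [a|k]; case: y => [b|k'].
- rewrite !hLL // (eq_ordS a b) (eq_ord_pred a b); ring.
- by rewrite hLR hRL mulNr.
- by rewrite hLR hRL mulNr opprK.
- by rewrite !hRR oppr0.
Qed.

Definition g2 n (u v : necklace_vertex n) := \sum_x hh u x * hh x v.

Lemma g2C n (u v : necklace_vertex n) : (2 < n)%N -> g2 v u = g2 u v.
Proof.
move=> hn; apply: eq_bigr => x _.
by rewrite (hh_anti v x hn) (hh_anti x u hn) mulrNN mulrC.
Qed.

Lemma KG n (u v : necklace_vertex n) : (2 < n)%N -> evn u ->
  g2 u v = if evn v then 4 * (u == v)%:R else 0.
Proof.
move=> hn eu; case: ifP => ev.
  case: u eu => [a|k] //= /evnE [t ->]; case: v ev => [b|k] //= /evnE [t' ->].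
  rewrite /g2 KE // eq_sym.
  case: (t =P t') => [->|h]; first by rewrite !eqxx.
  have /negbTE -> : inl (Ev t) != inl (Ev t') :> necklace_vertex n.
    by apply/eqP; case=> e; apply: h; apply: val_inj => /=; lia.
  done.
apply: big1 => x _; case ex: (evn x).
  by rewrite (bip hn (_ : evn u = evn x)) ?mul0r // eu ex.
by rewrite (bip hn (_ : evn x = evn v)) ?mulr0 // ex ev.
Qed.

Definition Mf (V : finType) (F : V -> V -> algC) : 'M[algC]_#|V| :=
  \matrix_(i, j) F (enum_val i) (enum_val j).

Lemma sum_enum (V : finType) (G : V -> algC) :
  \sum_(k < #|V|) G (enum_val k) = \sum_x G x.
Proof. by rewrite -(big_enum_val G). Qed.

Lemma MfM (V : finType) (F G : V -> V -> algC) :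
  Mf F *m Mf G = Mf (fun u v => \sum_x F u x * G x v).
Proof.
apply/matrixP => i j; rewrite !mxE.
rewrite -(sum_enum (fun x => F (enum_val i) x * G x (enum_val j))).
by apply: eq_bigr => k _; rewrite !mxE.
Qed.

Lemma Mf_tr (V : finType) (F : V -> V -> algC) : \tr (Mf F) = \sum_u F u u.
Proof.
rewrite /mxtrace -(sum_enum (fun u => F u u)).
by apply: eq_bigr => k _; rewrite mxE.
Qed.

Lemma sum_deltaT (T : finType) (s : T) (F : T -> algC) :
  \sum_b (b == s)%:R * F b = F s.
Proof.
rewrite (bigD1 s) //= eqxx mul1r big1 ?addr0 // => b /negbTE ->; by rewrite mul0r.
Qed.

Lemma g3_eq n (u v : necklace_vertex n) : (2 < n)%N ->
  \sum_x g2 u x * hh x v = 4 * hh u v.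
Proof.
move=> hn; case eu: (evn u).
  rewrite -(sum_deltaT u (fun x => 4 * hh x v)); apply: eq_bigr => x _.
  rewrite KG //; case ex: (evn x); first by rewrite eq_sym; ring.
  have /negbTE -> : x != u by apply/eqP => h; move: ex; rewrite h eu.
  by rewrite !mul0r.
have -> : \sum_x g2 u x * hh x v = \sum_y hh u y * g2 y v.
  rewrite /g2; under eq_bigr do rewrite big_distrl /=.
  rewrite exchange_big /=; apply: eq_bigr => y _.
  by rewrite big_distrr /=; apply: eq_bigr => x _; rewrite mulrA.
rewrite -(sum_deltaT v (fun y => 4 * hh u y)); apply: eq_bigr => y _.
case ey: (evn y).
  rewrite KG //; case ev: (evn v); first by ring.
  have /negbTE -> : y != v by apply/eqP => h; move: ey; rewrite h ev.
  by rewrite !mul0r mulr0.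
by rewrite (bip hn (_ : evn u = evn y)) ?mul0r ?mulr0 // eu ey.
Qed.

Lemma H3 n : (2 < n)%N ->
  herm_adj (@necklace_arc n) *m herm_adj (@necklace_arc n) *m herm_adj (@necklace_arc n)
  = 4 *: herm_adj (@necklace_arc n).
Proof.
move=> hn; rewrite -[herm_adj _]/(Mf (@hh n)) !MfM.
by apply/matrixP => i j; rewrite !mxE -g3_eq.

Qed.

Lemma count_even n : \sum_(a < 2 * n) (~~ odd a)%:R = n%:R :> algC.
Proof.
rewrite -(big_mkord xpredT (fun a => (~~ odd a)%:R)).
elim: n => [|n IH]; first by rewrite big_geq.
rewrite (_ : (2 * n.+1 = (2 * n).+2)%N); last by lia.
rewrite !big_nat_recr //= IH oddM /= addr0.
by rewrite natr1.
Qed.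

Lemma trH n : (2 < n)%N -> \tr (herm_adj (@necklace_arc n)) = 0.
Proof.
move=> hn; rewrite -[herm_adj _]/(Mf (@hh n)) Mf_tr.
by apply: big1 => u _; rewrite bip.
Qed.

Lemma trH2 n : (2 < n)%N ->
  \tr (herm_adj (@necklace_arc n) *m herm_adj (@necklace_arc n)) = (8 * n)%:R.
Proof.
move=> hn; rewrite -[herm_adj _]/(Mf (@hh n)) MfM Mf_tr.
set T := fun u x : necklace_vertex n => hh u x * hh x u.
have eT u x : T u x = (evn u)%:R * T u x + (evn x)%:R * T u x.
  rewrite /T; case eu: (evn u); case ex: (evn x).
  - by rewrite (@bip n u x hn) ?mul0r ?mulr0 ?addr0 // eu ex.
  - by rewrite mul1r mul0r addr0.
  - by rewrite mul1r mul0r add0r.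
  - by rewrite (@bip n u x hn) ?mul0r ?mulr0 ?addr0 // eu ex.
rewrite (eq_bigr (fun u => \sum_x (evn u)%:R * T u x + \sum_x (evn x)%:R * T u x)); last first.
  by move=> u _; rewrite -big_split /=; apply: eq_bigr => x _; rewrite -eT.
rewrite big_split /=.
rewrite [X in _ + X]exchange_big /=.
have -> : \sum_x \sum_u (evn x)%:R * T u x = \sum_u \sum_x (evn u)%:R * T u x.
  by apply: eq_bigr => u _; apply: eq_bigr => x _; rewrite /T; ring.
have H u : \sum_x (evn u)%:R * T u x = (evn u)%:R * 4.
  rewrite -big_distrr /=.
  case eu: (evn u); last by rewrite !mul0r.
  by rewrite -[\sum_x T u x]/(g2 u u) KG // eu eqxx mulr1.
rewrite !(eq_bigr _ (fun u _ => H u)).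
rewrite -big_distrl /= /necklace_vertex big_sumType /=.
rewrite count_even big1 ?addr0 //.
rewrite natrM; ring.
Qed.

Theorem corollary7p2 (n : nat) (hn : (3 <= n)%N) :
  char_poly (herm_adj (@necklace_arc n))
  = 'X ^+ n * ('X - 2%:P) ^+ n * ('X + 2%:P) ^+ n :> {poly algC}.
Proof.
apply: charpoly_gen; first exact: H3.
- exact: trH.
- exact: trH2.
- by rewrite /necklace_vertex card_sum !card_ord; lia.
Qed.
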